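(* Let $(S,+)$ be a commutative cancellative semigroup with no identity element such that its difference group $S-S$ carries a multiplication $\cdot$ making $(S-S,+,\cdot)$ an integral domain. Let $j\in\mathbb{N}$, let $R$ be a nonempty finite set of integral polynomials on $(S-S)^j$, let $A$ be a piecewise syndetic subset of $S$, and let $\langle\vec y_n\rangle_{n=1}^\infty$ be a sequence in $S^j$. Then there exist $a\in S$ and a nonempty finite set $H\subseteq\mathbb{N}$ such that $a+f\big(\sum_{n\in H}\vec y_n\big)\in A$ for every $f\in R$.
   Context: The difference group of a commutative cancellative semigroup $S$ is the abelian group $S-S=\{a-b: a,b\in S\}$, where $a-b$ is the element with $(a-b)+b=a$; $S$ is regarded as a subset of $S-S$, and $S^j\subseteq(S-S)^j$ with coordinatewise addition. An integral polynomial on $(S-S)^j$ is a polynomial function $(S-S)^j\to S-S$ in $j$ variables with coefficients in $S-S$ and zero constant term. For $t\in S$ and $A\subseteq S$, $-t+A=\{s\in S: t+s\in A\}$. A set $A\subseteq S$ is piecewise syndetic if there is a finite $G\subseteq S$ such that for every finite $F\subseteq S$ there is $x\in S$ with $F+x\subseteq\bigcup_{t\in G}(-t+A)$. $\mathbb{N}=\{1,2,\dots\}$. *)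

(* Defs.v *)
From mathcomp Require Import all_boot all_order all_algebra.
From mathcomp Require Import mpoly.
Set Implicit Arguments. Unset Strict Implicit. Unset Printing Implicit Defensive.
Import GRing.Theory.
Local Open Scope ring_scope.

(* The commutative cancellative semigroup S is represented, as in the paper,
   as a subset of its difference group G = S - S, which carries a ring
   structure making it an integral domain. *)

Definition diff_group_semigroup (G : idomainType) (S : G -> Prop) : Prop :=
  [/\ (forall a b, S a -> S b -> S (a + b)),
      (forall g : G, exists a b, [/\ S a, S b & g = a - b])
    & ~ (exists e, S e /\ forall s, S s -> e + s = s)].

Definition shiftback (G : zmodType) (S A : G -> Prop) (t : G) : G -> Prop :=
  fun s => S s /\ A (t + s).

Definition piecewise_syndetic (G : zmodType) (S A : G -> Prop) : Prop :=
  exists Gs : seq G, (forall t, t \in Gs -> S t) /\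
    forall Fs : seq G, (forall s, s \in Fs -> S s) ->
      exists x, S x /\ forall s, s \in Fs ->
        exists2 t, t \in Gs & shiftback S A t (s + x).

Definition is_integral_polynomial (G : comRingType) (j : nat) (p : {mpoly G[j]}) : Prop :=
  p@_0%MM = 0.

(* Main.v *)
Require Import Defs.
From HB Require Import structures.
From mathcomp Require Import all_boot all_order all_algebra.
From mathcomp Require Import mpoly.
From Stdlib Require Import Classical ClassicalEpsilon FunctionalExtensionality PropExtensionality.
From mathcomp Require Import ring.
Import GRing.Theory.
Local Open Scope ring_scope.
Set Implicit Arguments. Unset Strict Implicit. Unset Printing Implicit Defensive.

Definition pb (P : Prop) : bool := if excluded_middle_informative P then true else false.
Lemma pbP (P : Prop) : reflect P (pb P).
Proof. rewrite /pb; case: excluded_middle_informative => h; by constructor. Qed.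

Definition fn (G V : zmodType) := V -> G.
Section FnEq.
Variables (G V : zmodType).
Definition fn_eq (f g : fn G V) := pb (f = g).
Lemma fn_eqP : Equality.axiom fn_eq.
Proof. move=> f g; exact: pbP. Qed.
End FnEq.
HB.instance Definition _ (G V : zmodType) := hasDecEq.Build (fn G V) (@fn_eqP G V).

Section Deg.
Variables (G V : zmodType).
Implicit Types (φ ψ χ : fn G V).

Fixpoint deg_le (d : nat) (φ : fn G V) : Prop :=
  match d with
  | 0 => forall v, φ v = φ 0
  | d'.+1 => forall e, deg_le d' (fun v => φ (v + e) - φ v)
  end.

Lemma deg_le_ext d φ ψ : (forall v, φ v = ψ v) -> deg_le d φ -> deg_le d ψ.
Proof.
elim: d φ ψ => [|d IH] φ ψ E /= h.
  by move=> v; rewrite -!E.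
move=> e; apply: (IH _ _ _ (h e)) => v; by rewrite !E.
Qed.

Lemma deg_le_add d φ ψ : deg_le d φ -> deg_le d ψ -> deg_le d (fun v => φ v + ψ v).
Proof.
elim: d φ ψ => [|d IH] φ ψ /= h1 h2.
  by move=> v; rewrite h1 h2.
move=> e; apply: deg_le_ext (IH _ _ (h1 e) (h2 e)) => v.
by rewrite opprD addrACA.
Qed.

Lemma deg_le_opp d φ : deg_le d φ -> deg_le d (fun v => - φ v).
Proof.
elim: d φ => [|d IH] φ /= h.
  by move=> v; rewrite h.
move=> e; apply: deg_le_ext (IH _ (h e)) => v.
by rewrite opprD.
Qed.

Lemma deg_le_sub d φ ψ : deg_le d φ -> deg_le d ψ -> deg_le d (fun v => φ v - ψ v).
Proof. by move=> h1 h2; apply: deg_le_add h1 (deg_le_opp h2). Qed.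

Lemma deg_le_const d (c : G) : deg_le d (fun _ => c).
Proof.
elim: d c => [|d IH] c /=; first by [].
by move=> e; apply: deg_le_ext (IH 0) => v; rewrite subrr.
Qed.

Lemma deg_le_S d φ : deg_le d φ -> deg_le d.+1 φ.
Proof.
elim: d φ => [|d IH] φ /= h e.
  by move=> v; rewrite (h (v + e)) (h v) (h (0 + e)).
exact: IH.
Qed.

Lemma deg_le_mono d d' φ : (d <= d')%N -> deg_le d φ -> deg_le d' φ.
Proof.
move=> /subnKC <-; elim: (d' - d)%N => [|k IH] h; first by rewrite addn0.
by rewrite addnS; apply: deg_le_S; apply: IH.
Qed.

Lemma deg_le_shift d φ e : deg_le d φ -> deg_le d (fun v => φ (v + e)).
Proof.
elim: d φ e => [|d IH] φ e /= h.
  by move=> v; rewrite h (h (0 + e)).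
move=> e'; apply: deg_le_ext (IH _ e (h e')) => v.
by rewrite addrAC.
Qed.

Lemma deg_le_0map d : deg_le d (fun _ : V => 0 : G).
Proof. exact: deg_le_const. Qed.

End Deg.
Arguments deg_le_const {G V} d c.

Section DegMul.
Variables (G : nzRingType) (V : zmodType).
Implicit Types (φ ψ : fn G V).

Lemma deg_le_scalel d (c : G) ψ : deg_le d ψ -> deg_le d (fun v => c * ψ v).
Proof.
elim: d ψ => [|d IH] ψ /= h; first by move=> v; rewrite h.
move=> e; apply: deg_le_ext (IH _ (h e)) => v; by rewrite mulrBr.
Qed.

Lemma deg_le_scaler d (c : G) ψ : deg_le d ψ -> deg_le d (fun v => ψ v * c).
Proof.
elim: d ψ => [|d IH] ψ /= h; first by move=> v; rewrite h.
move=> e; apply: deg_le_ext (IH _ (h e)) => v; by rewrite mulrBl.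
Qed.

Lemma deg_le_mul a b φ ψ : deg_le a φ -> deg_le b ψ ->
  deg_le (a + b) (fun v => φ v * ψ v).
Proof.
elim: a b φ ψ => [|a IHa] b φ ψ.
  move=> /= h1 h2; apply: deg_le_ext (deg_le_scalel (φ 0) h2) => v.
  by rewrite h1.
elim: b φ ψ => [|b IHb] φ ψ h1 h2.
  rewrite addn0; apply: deg_le_ext (deg_le_scaler (ψ 0) h1) => v.
  by rewrite h2.
have -> : (a.+1 + b.+1 = (a.+1 + b).+1)%N by rewrite addnS.
move=> e.
have E : forall v, (φ (v + e) - φ v) * ψ (v + e) + φ v * (ψ (v + e) - ψ v)
   = φ (v + e) * ψ (v + e) - φ v * ψ v.
  by move=> v; rewrite mulrBl mulrBr addrA subrK.
apply: deg_le_ext E _.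
apply: deg_le_add.
  rewrite addSnnS; apply: IHa; [exact: h1 | exact: deg_le_shift].
by apply: IHb => //; exact: h2.
Qed.

End DegMul.


Section FD.
Variables (G : comNzRingType) (V : zmodType).
Definition fd (φ : fn G V) := exists D, deg_le D φ.

Lemma fd_add φ ψ : fd φ -> fd ψ -> fd (fun v => φ v + ψ v).
Proof.
move=> [a ha] [b hb]; exists (maxn a b); apply: deg_le_add.
  exact: deg_le_mono (leq_maxl a b) ha.
exact: deg_le_mono (leq_maxr a b) hb.
Qed.

Lemma fd_mul φ ψ : fd φ -> fd ψ -> fd (fun v => φ v * ψ v).
Proof. move=> [a ha] [b hb]; exists (a + b)%N; exact: deg_le_mul. Qed.

Lemma fd_const c : fd (fun _ => c).
Proof. exists 0%N; exact: deg_le_const. Qed.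

Lemma fd_sum (I : Type) (s : seq I) (F : I -> fn G V) :
  (forall x, fd (F x)) -> fd (fun v => \sum_(x <- s) F x v).
Proof.
move=> h; elim: s => [|x s IH].
  by case: (fd_const 0) => D hD; exists D; apply: deg_le_ext hD => v; rewrite big_nil.
case: (fd_add (h x) IH) => D hD; exists D; apply: deg_le_ext hD => v.
by rewrite big_cons.
Qed.

Lemma fd_prod (I : Type) (s : seq I) (F : I -> fn G V) :
  (forall x, fd (F x)) -> fd (fun v => \prod_(x <- s) F x v).
Proof.
move=> h; elim: s => [|x s IH].
  case: (fd_const 1) => D hD; exists D; apply: deg_le_ext hD => v; by rewrite big_nil.
case: (fd_mul (h x) IH) => D hD; exists D; apply: deg_le_ext hD => v.
by rewrite big_cons.
Qed.

Lemma fd_exp φ k : fd φ -> fd (fun v => φ v ^+ k).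
Proof.
move=> h; elim: k => [|k IH].
  case: (fd_const 1) => D hD; exists D; apply: deg_le_ext hD => v; by rewrite expr0.
case: (fd_mul h IH) => D hD; exists D; apply: deg_le_ext hD => v.
by rewrite exprS.
Qed.
End FD.

Lemma fd_meval (G : comNzRingType) (n : nat) (f : {mpoly G[n]}) :
  fd (fun v : {ffun 'I_n -> G} => f.@[fun i => v i]).
Proof.
have -> : (fun v : {ffun 'I_n -> G} => f.@[fun i => v i]) =
   (fun v => \sum_(m <- msupp f) (fun m v => f@_m * \prod_(i <- index_enum 'I_n) (fun i (v : {ffun 'I_n -> G}) => v i ^+ m i) i v) m v).
  by [].
apply: fd_sum => m; apply: fd_mul; first exact: fd_const.
apply: fd_prod => i; apply: fd_exp.
exists 1%N; move=> /= e v; rewrite !ffunE addrAC subrr add0r; rewrite ?ffunE ?add0r ?subr0 //.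
Qed.

Section Level.
Variables (G V : zmodType).
Implicit Types (φ ψ χ κ : fn G V).

Definition lowish (d : nat) φ : Prop :=
  match d with 0 => True | d'.+1 => deg_le d' φ end.
Definition low (d : nat) φ : Prop :=
  match d with 0 => False | d'.+1 => deg_le d' φ end.
Definition level d φ := deg_le d φ /\ ~ low d φ.
Definition near d φ ψ := deg_le d ψ /\ lowish d (fun v => φ v - ψ v).

Lemma lowish_ext d φ ψ : (forall v, φ v = ψ v) -> lowish d φ -> lowish d ψ.
Proof. case: d => //= d; exact: deg_le_ext. Qed.
Lemma lowish_add d φ ψ : lowish d φ -> lowish d ψ -> lowish d (fun v => φ v + ψ v).
Proof. case: d => //= d; exact: deg_le_add. Qed.
Lemma lowish_opp d φ : lowish d φ -> lowish d (fun v => - φ v).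
Proof. case: d => //= d; exact: deg_le_opp. Qed.
Lemma lowish_sub d φ ψ : lowish d φ -> lowish d ψ -> lowish d (fun v => φ v - ψ v).
Proof. case: d => //= d; exact: deg_le_sub. Qed.
Lemma lowish_const d c : lowish d (fun _ => c).
Proof. case: d => //= d; exact: deg_le_const. Qed.
Lemma lowish_deg d φ : deg_le d φ -> lowish d.+1 φ.
Proof. by []. Qed.
Lemma lowish_deg_lt d d' φ : (d < d')%N -> deg_le d φ -> lowish d' φ.
Proof. case: d' => //= d' h; exact: deg_le_mono. Qed.
Lemma level_exists D φ : deg_le D φ -> exists2 d, (d <= D)%N & level d φ.
Proof.
elim: D => [|D IH] h; first by exists 0%N => //; split.
case: (classic (deg_le D φ)) => hD.
  by case: (IH hD) => d hd hl; exists d => //; exact: leqW.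
by exists D.+1 => //; split.
Qed.

Lemma level_le d D φ : level d φ -> deg_le D φ -> (d <= D)%N.
Proof.
case=> _ hn hD; rewrite leqNgt; apply/negP => lt.
case: d lt hn => // d lt hn; apply: hn => /=; exact: deg_le_mono hD.
Qed.

Lemma level_uniq d d' φ : level d φ -> level d' φ -> d = d'.
Proof.
move=> h1 h2; apply/eqP; rewrite eqn_leq (level_le h1 h2.1) (level_le h2 h1.1) //.
Qed.

Lemma near_level d φ ψ : level d φ -> near d φ ψ -> level d ψ.
Proof.
case=> h1 h2 [h3 h4]; split => // hl; apply: h2.
case: d h1 h3 h4 hl => //= d h1 h3 h4 hl.
by apply: deg_le_ext (deg_le_add h4 hl) => v; rewrite subrK.
Qed.

Lemma near_refl d φ : level d φ -> near d φ φ.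
Proof.
case=> h1 _; split => //; apply: lowish_ext (lowish_const d 0) => v.
by rewrite subrr.
Qed.

Lemma near_sym d φ ψ : level d φ -> near d φ ψ -> near d ψ φ.
Proof.
case=> h1 _ [h3 h4]; split => //; apply: lowish_ext (lowish_opp h4) => v.
by rewrite opprB.
Qed.

Lemma near_trans d φ ψ χ : near d φ ψ -> near d ψ χ -> near d φ χ.
Proof.
case=> _ h1 [h2 h3]; split => //; apply: lowish_ext (lowish_add h1 h3) => v.
by rewrite addrA subrK.
Qed.

Definition rep d φ : fn G V :=
  epsilon (inhabits (fun _ : V => 0 : G)) (near d φ).

Lemma rep_spec d φ : level d φ -> near d φ (rep d φ).
Proof. move=> h; apply: epsilon_spec; exists φ; exact: near_refl. Qed.

Lemma rep_level d φ : level d φ -> level d (rep d φ).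
Proof. move=> h; exact: near_level h (rep_spec h). Qed.

Lemma rep_eq d φ ψ : level d φ -> near d φ ψ -> rep d ψ = rep d φ.
Proof.
move=> h1 h2; have h3 := near_level h1 h2.
rewrite /rep; congr epsilon; apply: functional_extensionality => χ.
apply: propositional_extensionality; split => h.
  exact: near_trans h2 h.
exact: near_trans (near_sym h1 h2) h.
Qed.

Lemma rep_rep d φ : level d φ -> rep d (rep d φ) = rep d φ.
Proof. move=> h; exact: rep_eq h (rep_spec h). Qed.

Lemma rep_near d φ ψ : level d φ -> level d ψ -> rep d φ = rep d ψ -> near d φ ψ.
Proof.
move=> h1 h2 E; apply: near_trans (rep_spec h1) _; rewrite E.
exact: near_sym h2 (rep_spec h2).
Qed.
End Level.

Fixpoint lexlt (s t : seq nat) : bool :=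
  match s, t with
  | a :: s', b :: t' => (a < b)%N || ((a == b) && lexlt s' t')
  | _, _ => false
  end.

Fixpoint down (n : nat) : seq nat := if n is n'.+1 then n :: down n' else [:: 0%N].
Lemma size_down n : size (down n) = n.+1.
Proof. by elim: n => //= n ->. Qed.

Lemma lex_down D (f g : nat -> nat) d0 : (d0 <= D)%N -> (f d0 < g d0)%N ->
  (forall d, (d0 < d)%N -> (d <= D)%N -> f d = g d) ->
  lexlt (map f (down D)) (map g (down D)).
Proof.
elim: D => [|D IH] /=.
  by rewrite leqn0 => /eqP -> ->.
move=> le lt heq; case: (ltngtP d0 D.+1) => [lt2 | lt2 | eq].
- rewrite heq // eqxx /= IH ?orbT //.
  move=> d h1 h2; apply: heq => //; exact: leqW.
- by rewrite ltnNge le in lt2.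
- by rewrite -eq lt.
Qed.

Definition lexR n (a b : seq nat) := size a = n /\ lexlt a b.

Lemma lex_acc n s : size s = n -> Acc (lexR n) s.
Proof.
elim: n s => [|n IH] s.
  move=> hs; constructor => a [_]; rewrite (size0nil hs) => h; by case: a h.
case: s => [hs|x s hs]; first by [].
have Hs : size s = n by case: hs.
clear hs; move: s Hs; elim/ltn_ind: x => x IHx s Hs.
have acc := IH s Hs.
elim: acc Hs => {}s _ IHs Hs.
constructor => -[|a t] [Ht]; first by [].
have Ht' : size t = n by case: Ht.
move=> /orP [lt | /andP [/eqP eqa hl]].
  exact: IHx lt t Ht'.
subst a; apply: (IHs t _ Ht'); by split.
Qed.

Section Weight.
Variables (G : comNzRingType) (V : zmodType).
Implicit Types (φ ψ χ κ : fn G V) (P Q : seq (fn G V)).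

Definition K d P : seq (fn G V) :=
  undup (map (rep d) (filter (fun φ => pb (level d φ)) P)).

Lemma memK d P κ : κ \in K d P <-> exists2 φ, φ \in P & level d φ /\ κ = rep d φ.
Proof.
rewrite mem_undup; split.
  case/mapP => φ; rewrite mem_filter => /andP[/pbP hl hP] ->; by exists φ.
case=> φ hP [hl ->]; apply: map_f; rewrite mem_filter hP andbT; exact/pbP.
Qed.

Definition meas D P := map (fun d => size (K d P)) (down D).

Definition sh (p φ : fn G V) (e : V) : fn G V :=
  fun v => φ (v + e) - φ e - (p (v + e) - p e).

Definition Pp (p : fn G V) Q (E : seq V) : seq (fn G V) := [seq sh p φ e | φ <- Q, e <- E].

Lemma L1 d φ e : deg_le d φ -> lowish d (fun v => (φ (v + e) - φ e) - φ v).
Proof.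
case: d => //= d h.
apply: deg_le_ext (deg_le_sub (h e) (deg_le_const d (φ e))) => v.
by rewrite addrAC.
Qed.

Lemma deg_le_dsh d φ e : deg_le d φ -> deg_le d (fun v => φ (v + e) - φ e).
Proof. move=> h; apply: deg_le_sub; [exact: deg_le_shift | exact: deg_le_const]. Qed.

Lemma sizes_eq (T : eqType) (s t : seq T) : uniq s -> uniq t ->
  {subset s <= t} -> {subset t <= s} -> size s = size t.
Proof.
move=> us ut h1 h2; apply/eqP; rewrite eqn_leq.
by rewrite (uniq_leq_size us h1) (uniq_leq_size ut h2).
Qed.

Variables (D d0 : nat) (P : seq (fn G V)) (p : fn G V) (E : seq V).
Hypothesis hD : forall φ, φ \in P -> deg_le D φ.
Hypothesis h0 : forall φ, φ \in P -> φ 0 = 0.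
Hypothesis hp : p \in P.
Hypothesis hpl : level d0 p.
Hypothesis hmin : forall φ d, φ \in P -> level d φ -> (d0 <= d)%N.
Hypothesis hE : 0 \in E.

Let Q := [seq φ <- P | φ != p].
Let P' := Pp p Q E.

Lemma near_sh d φ e : level d φ -> (d0 < d)%N -> near d φ (sh p φ e).
Proof.
move=> hl lt; split.
  apply: deg_le_sub; first exact: deg_le_dsh hl.1.
  apply: deg_le_mono (ltnW lt) _; exact: deg_le_dsh hpl.1.
have h1 := L1 e hl.1.
have h2 : lowish d (fun v => p (v + e) - p e) by apply: lowish_deg_lt lt _; exact: deg_le_dsh hpl.1.
apply: lowish_ext (lowish_sub h2 h1) => v.
rewrite /sh; ring.
Qed.

Lemma inQ φ : φ \in Q -> φ \in P /\ φ != p.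
Proof. by rewrite mem_filter => /andP[]. Qed.

Lemma d0_pos φ : φ \in Q -> level d0 φ -> (0 < d0)%N.
Proof.
case/inQ => hP hne hl; case: d0 hpl hl => // hpl' hl'.
exfalso; move/eqP: hne; apply; apply: functional_extensionality => v.
by rewrite hl'.1 hpl'.1 (h0 hP) (h0 hp).
Qed.

Lemma sh_near0 φ e : deg_le d0 φ ->
  near d0 (fun v => φ v - p v) (sh p φ e).
Proof.
move=> hl; split.
  by apply: deg_le_sub; [exact: deg_le_dsh hl | exact: deg_le_dsh hpl.1].
apply: lowish_ext (lowish_sub (L1 e hpl.1) (L1 e hl)) => v.
rewrite /sh; ring.
Qed.

Lemma classify ψ d : ψ \in P' -> level d ψ -> (d0 <= d)%N ->
  exists2 φ, φ \in Q & level d φ /\ ((d0 < d)%N -> near d φ ψ) /\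
     (d = d0 -> level d0 (fun v => φ v - p v) /\ near d0 (fun v => φ v - p v) ψ).
Proof.
case/allpairsP => [[φ e] [/= hQ hEe ->]] hl hle.
have [hP _] := inQ hQ.
case: (level_exists (hD hP)) => dφ _ hlφ.
have hmφ := hmin hP hlφ.
case: (ltngtP d0 dφ) => [lt | lt2 | eq].
- have hn := near_sh e hlφ lt.
  have hl2 := near_level hlφ hn.
  have EQ := level_uniq hl2 hl; subst dφ.
  exists φ => //; split => //; split => // eq; by rewrite eq ltnn in lt.
- by rewrite ltnNge hmφ in lt2.
- subst dφ.
  have pos := d0_pos hQ hlφ.
  have hn := sh_near0 e hlφ.1.
  case: (classic (lowish d0 (fun v => φ v - p v))) => hlow.
    exfalso; case: hl => _; apply.
    case: d0 pos hle hlow hn => // d0' _ hle hlow [_ hn].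
    case: d hle => // d hle /=.
    rewrite ltnS in hle; apply: (deg_le_mono hle).
    by apply: deg_le_ext (deg_le_sub hlow hn) => v; ring.
  have hl3 : level d0 (fun v => φ v - p v).
    split; first by apply: deg_le_sub; [exact: hlφ.1 | exact: hpl.1].
    move: pos hlow; rewrite /low /lowish; by case: (d0) => [|d0'] //.
  have hl4 := near_level hl3 hn.
  have EQ := level_uniq hl4 hl; subst d.
  exists φ => //; split => //; split => // lt; by rewrite ltnn in lt.
Qed.

Lemma K_sub_eq d : (d0 < d)%N -> size (K d P') = size (K d P).
Proof.
move=> lt; apply: sizes_eq; try exact: undup_uniq.
  move=> κ /memK [ψ hψ [hl ->]].
  have [φ hQ [hlφ [hn _]]] := classify hψ hl (ltnW lt).
  rewrite (rep_eq hlφ (hn lt)); apply/memK; exists φ => //; exact: (inQ hQ).1.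
move=> κ /memK [φ hP [hl ->]].
have hne : φ != p.
  apply/negP => /eqP EQ; subst φ; have := level_uniq hl hpl => EQ; subst d.
  by rewrite ltnn in lt.
have hQ : φ \in Q by rewrite mem_filter hne.
have hn := near_sh 0 hl lt.
rewrite -(rep_eq hl hn); apply/memK; exists (sh p φ 0) => //.
  exact: allpairs_f.
split => //; exact: near_level hl hn.
Qed.

Lemma K_lt : (size (K d0 P') < size (K d0 P))%N.
Proof.
pose h (κ : fn G V) : fn G V := rep d0 (fun v => κ v + p v).
have hrp : rep d0 p \in K d0 P by apply/memK; exists p.
have key : forall κ, κ \in K d0 P' -> [/\ level d0 κ, rep d0 κ = κ,
   level d0 (fun v => κ v + p v) &
   exists2 φ, φ \in P & level d0 φ /\ h κ = rep d0 φ /\ rep d0 φ != rep d0 p].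
  move=> κ /memK [ψ hψ [hl ->]].
  have [φ hQ [hlφ [_ [//|hl3 hn]]]] := classify hψ hl (leqnn _).
  have hrl := rep_level hl.
  have hnear : near d0 φ (fun v => rep d0 ψ v + p v).
    split.
      apply: deg_le_add; [exact: hrl.1 | exact: hpl.1].
    have hr := rep_spec hl; case: hn => _ hn; case: hr => _ hr.
    apply: lowish_ext (lowish_add hn hr) => v; ring.
  split => //.
  - exact: rep_rep.
  - exact: near_level hlφ hnear.
  exists φ; first exact: (inQ hQ).1.
  split => //; split.
    rewrite /h; exact: rep_eq hlφ hnear.
  apply/eqP => EQ; case: hl3 => _; apply.
  have := rep_near hlφ hpl EQ; case => _ hn2.
  have pos := d0_pos hQ hlφ; move: pos hn2; rewrite /low /lowish; by case: (d0).
have hinj : {in K d0 P' &, injective h}.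
  move=> κ1 κ2 h1 h2 EQ.
  have [hl1 hr1 hlp1 _] := key _ h1; have [hl2 hr2 hlp2 _] := key _ h2.
  have [_ hn] := rep_near hlp1 hlp2 EQ.
  have hn12 : near d0 κ1 κ2.
    split; first exact: hl2.1.
    by apply: lowish_ext hn => v; ring.
  by rewrite -hr1 -hr2 (rep_eq hl1 hn12).
have hsub : {subset map h (K d0 P') <= rem (rep d0 p) (K d0 P)}.
  move=> x /mapP [κ hκ ->]; rewrite (mem_rem_uniq _ (undup_uniq _)) inE.
  have [_ _ _ [φ hP [hlφ [-> hne]]]] := key _ hκ.
  rewrite hne /=; apply/memK; by exists φ.
have := uniq_leq_size _ hsub.
rewrite map_inj_in_uniq // undup_uniq size_map size_rem // => /(_ isT) le.
have pos : (0 < size (K d0 P))%N by case: (K d0 P) hrp.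
by move: le pos; case: (size (K d0 P)).
Qed.

Lemma meas_lt : lexlt (meas D P') (meas D P).
Proof.
rewrite /meas.
have h1 := level_le hpl (hD hp).
have h2 := K_lt.
have h3 : forall d, (d0 < d)%N -> (d <= D)%N -> size (K d P') = size (K d P).
  by move=> d lt _; exact: K_sub_eq.
exact: (lex_down h1 h2 h3).
Qed.

Lemma P'_inv ψ : ψ \in P' -> deg_le D ψ /\ ψ 0 = 0.
Proof.
case/allpairsP => [[φ e] [/= hQ hEe ->]]; have [hP _] := inQ hQ; split.
  apply: deg_le_sub; [exact: deg_le_dsh (hD hP) | exact: deg_le_dsh (hD hp)].
by rewrite /sh /= add0r !subrr ?subr0.
Qed.
End Weight.

Fixpoint subs (s : seq nat) : seq (seq nat) :=
  if s is x :: s' then subs s' ++ map (cons x) (subs s') else [:: [::]].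

Lemma nil_subs s : [::] \in subs s.
Proof. by elim: s => [|x s IH] //=; rewrite mem_cat IH. Qed.

Lemma filter_subs (a : pred nat) s : filter a s \in subs s.
Proof.
elim: s => [|x s IH] //=; rewrite mem_cat; case: (a x).
  by rewrite (map_f (cons x) IH) orbT.
by rewrite IH.
Qed.

Section Comb.
Variables (G : comNzRingType) (V : zmodType) (y : nat -> V).

Definition ysum (H : seq nat) : V := \sum_(n <- H) y n.
Definition rng (m N : nat) (H : seq nat) : bool :=
  uniq H && all (fun n => (m <= n < N)%N) H.

Definition Mono (T : finType) (P : seq (fn G V)) (c : G -> T) m N (F : seq G) : Prop :=
  exists a H, [/\ a \in F, H != [::], rng m N H &
    exists col, forall φ, φ \in P -> a + φ (ysum H) \in F /\ c (a + φ (ysum H)) = col].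

Definition Phi (P : seq (fn G V)) : Prop :=
  forall (T : finType) (m : nat), exists N F, (m <= N)%N /\ forall c : G -> T, Mono P c m N F.

Lemma rng_mono m m' N N' H : (m' <= m)%N -> (N <= N')%N -> rng m N H -> rng m' N' H.
Proof.
move=> h1 h2 /andP [u a]; rewrite /rng u /=; apply/allP => n /(allP a) /andP [h3 h4].
by rewrite (leq_trans h1 h3) (leq_trans h4 h2).
Qed.

Lemma subs_ysum m N D : (m <= N)%N -> rng m N D ->
  exists2 D', D' \in subs (iota m (N - m)) & ysum D' = ysum D.
Proof.
move=> hmN /andP [u a].
exists [seq n <- iota m (N - m) | n \in D]; first exact: filter_subs.
rewrite /ysum; apply: perm_big; apply: uniq_perm => //.
  by rewrite filter_uniq // iota_uniq.
move=> n; rewrite mem_filter; case hn: (n \in D) => //=.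
rewrite mem_iota subnKC //; exact: (allP a).
Qed.

Lemma Mono_sub (T : finType) P P' (c : G -> T) m N F F' :
  {subset P' <= P} -> {subset F <= F'} -> Mono P c m N F -> Mono P' c m N F'.
Proof.
move=> sP sF [a [H [ha hH hr [col hc]]]]; exists a, H; split => //; first exact: sF.
exists col => φ /sP /hc [h1 h2]; split => //; exact: sF.
Qed.

Lemma ysum_cat D H : ysum (D ++ H) = ysum D + ysum H.
Proof. by rewrite /ysum big_cat. Qed.

Lemma rng_cat m N1 N2 D H : (m <= N1)%N -> (N1 <= N2)%N ->
  rng m N1 D -> rng N1 N2 H -> rng m N2 (D ++ H).
Proof.
move=> hm hN /andP [u1 a1] /andP [u2 a2].
have h1 : ~~ has (mem D) H.
  apply/hasPn => n /(allP a2) /andP [k1 _]; apply/negP => /(allP a1) /andP [_ k3].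
  by rewrite ltnNge k1 in k3.
have h2 : all (fun n => (m <= n < N2)%N) D.
  apply/allP => n /(allP a1) /andP [k1 k2]; rewrite k1 /=; exact: leq_trans k2 hN.
have h3 : all (fun n => (m <= n < N2)%N) H.
  apply/allP => n /(allP a2) /andP [k1 k2]; rewrite k2 andbT; exact: leq_trans hm k1.
by rewrite /rng cat_uniq u1 u2 h1 all_cat h2 h3.
Qed.

Section Focus.
Variables (T : finType) (p : fn G V) (Q : seq (fn G V)).
Hypothesis hp0 : p 0 = 0.
Hypothesis hQ0 : forall φ, φ \in Q -> φ 0 = 0.
Hypothesis IH : forall E : seq V, 0 \in E -> Phi (Pp p Q E).

Definition Focus (c : G -> T) m N (F : seq G) k : Prop :=
  exists b (Ds : seq (seq nat * T)), [/\ b \in F, size Ds = k, uniq (map snd Ds) &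
    forall z, z \in Ds -> [/\ z.1 != [::], rng m N z.1 &
      forall φ, φ \in Q -> b - p (ysum z.1) + φ (ysum z.1) \in F /\
         c (b - p (ysum z.1) + φ (ysum z.1)) = z.2]].

Definition Claim k := forall m, exists N F, (m <= N)%N /\
  forall c : G -> T, Mono (p :: Q) c m N F \/ Focus c m N F k.

Lemma claim0 : Claim 0.
Proof.
move=> m; exists m, [:: 0]; split => // c; right; exists 0, [::]; split => //; by rewrite mem_seq1.
Qed.

Lemma cm_eq (F1 : seq G) (c : G -> T) u w :
  [ffun i : 'I_(size F1) => c (nth 0 F1 i + u)] = [ffun i : 'I_(size F1) => c (nth 0 F1 i + w)] ->
  forall g, g \in F1 -> c (g + u) = c (g + w).
Proof.
move=> EQ g hg; have hi : (index g F1 < size F1)%N by rewrite index_mem.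
have := congr1 (fun f : {ffun 'I_(size F1) -> T} => f (Ordinal hi)) EQ; rewrite !ffunE /= nth_index //.
Qed.

Lemma claimS k : Claim k -> Claim k.+1.
Proof.
move=> HC m; have [N1 [F1 [hmN1 HF1]]] := HC m.
pose E := [seq ysum D | D <- subs (iota m (N1 - m))].
have hE : 0 \in E.
  rewrite (_ : 0 = ysum [::]); last by rewrite /ysum big_nil.
  exact: map_f (nil_subs _).
have [N2 [F2 [hN12 HF2]]] := IH hE {ffun 'I_(size F1) -> T} N1.
pose Fa := [seq f + w | f <- F1, w <- F2].
have hmN2 : (m <= N2)%N by exact: leq_trans hmN1 hN12.
exists N2, (Fa ++ [seq g - p (ysum D) | g <- Fa, D <- subs (iota m (N2 - m))]); split => //.
move=> c.
pose cm (x : G) : {ffun 'I_(size F1) -> T} := [ffun i : 'I_(size F1) => c (nth 0 F1 i + x)].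
have [x [H [hxF hH hrH [colm hcolm]]]] := HF2 cm.
have [zz hzz hzc] : exists2 zz, zz \in F2 & forall ψ, ψ \in Pp p Q E ->
    forall g, g \in F1 -> c (g + (x + ψ (ysum H))) = c (g + zz).
  case EP: (Pp p Q E) => [|ψ1 l].
    by exists x.
  have h1 : ψ1 \in Pp p Q E by rewrite EP mem_head.
  exists (x + ψ1 (ysum H)); first exact: (hcolm _ h1).1.
  move=> ψ hψ; rewrite -EP in hψ; apply: cm_eq.
  move: (hcolm _ hψ).2 (hcolm _ h1).2 => e1 e2; rewrite /cm in e1 e2.
  by rewrite e1 e2.
have memFa : forall f w, f \in F1 -> w \in F2 -> f + w \in Fa.
  by move=> f w hf hw; apply: (allpairs_f (fun f w => f + w)).
have memF : forall f w, f \in F1 -> w \in F2 ->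
    f + w \in Fa ++ [seq g - p (ysum D) | g <- Fa, D <- subs (iota m (N2 - m))].
  by move=> f w hf hw; rewrite mem_cat memFa.
have memFb : forall f w D, f \in F1 -> w \in F2 -> rng m N2 D ->
    f + w - p (ysum D) \in Fa ++ [seq g - p (ysum D) | g <- Fa, D <- subs (iota m (N2 - m))].
  move=> f w D hf hw hD; have [D' hD' <-] := subs_ysum hmN2 hD.
  rewrite mem_cat; apply/orP; right.
  by apply: (allpairs_f (fun g D => g - p (ysum D))) => //; exact: memFa.
case: (HF1 (fun g => c (g + zz))) => [[a [D [haF hD hrD [col hcol]]]] |
      [b [Ds [hbF hsz huniq hDs]]]].
- left; exists (a + zz), D; split => //.
  + exact: memF.
  + exact: rng_mono hrD.
  exists col => φ hφ; have [h1 h2] := hcol φ hφ.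
  have -> : a + zz + φ (ysum D) = (a + φ (ysum D)) + zz by ring.
  split => //; exact: memF.
case: (boolP (c (b + zz) \in map snd Ds)) => hin.
- left; case/mapP: hin => z hz hcz.
  have [hz1 hrz hzQ] := hDs z hz.
  exists (b - p (ysum z.1) + zz), z.1; split => //.
  + rewrite addrAC; apply: memFb => //; exact: rng_mono hrz.
  + exact: rng_mono hrz.
  exists z.2 => φ; rewrite inE => /orP [/eqP -> | hφ].
    have -> : b - p (ysum z.1) + zz + p (ysum z.1) = b + zz by ring.
    split; [exact: memF | by rewrite hcz].
  have [h1 h2] := hzQ φ hφ.
  have -> : b - p (ysum z.1) + zz + φ (ysum z.1) = (b - p (ysum z.1) + φ (ysum z.1)) + zz by ring.
  split; [exact: memF | exact: h2].
right.
exists (b + x), ([seq (z.1 ++ H, z.2) | z <- Ds] ++ [:: (H, c (b + zz))]); split.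
- exact: memF.
- by rewrite size_cat size_map hsz addn1.
- rewrite map_cat.
  have -> : map snd [seq (z.1 ++ H, z.2) | z <- Ds] = map snd Ds.
    by elim: (Ds) => //= z l ->.
  by rewrite cats1 rcons_uniq hin huniq.
move=> z'; rewrite mem_cat => /orP [/mapP [z hz ->] | ].
  have [hz1 hrz hzQ] := hDs z hz.
  split.
  + by case: (z.1) hz1.
  + exact: rng_cat hrz hrH.
  move=> φ hφ /=; have [h1 h2] := hzQ φ hφ.
  have [D' hD' hDe] := subs_ysum hmN1 hrz.
  have He : ysum z.1 \in E by rewrite -hDe; exact: map_f.
  have hψ : sh p φ (ysum z.1) \in Pp p Q E.
    exact: (allpairs_f (fun φ e => sh p φ e)).
  rewrite ysum_cat.
  have -> : b + x - p (ysum z.1 + ysum H) + φ (ysum z.1 + ysum H) =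
     (b - p (ysum z.1) + φ (ysum z.1)) + (x + sh p φ (ysum z.1) (ysum H)).
    rewrite /sh /= [ysum z.1 + _]addrC; ring.
  split; first exact: memF h1 (hcolm _ hψ).1.
  by rewrite hzc.
rewrite inE => /eqP -> /=; split => //.
  exact: rng_mono hrH.
move=> φ hφ.
have hψ : sh p φ 0 \in Pp p Q E.
  exact: (allpairs_f (fun φ e => sh p φ e)).
have -> : b + x - p (ysum H) + φ (ysum H) = b + (x + sh p φ 0 (ysum H)).
  rewrite /sh /= !addr0 hp0 (hQ0 hφ); ring.
split; first exact: memF hbF (hcolm _ hψ).1.
exact: hzc.
Qed.

Lemma focus_final m : exists N F, (m <= N)%N /\ forall c : G -> T, Mono (p :: Q) c m N F.
Proof.
have claims : forall k, Claim k by elim => [|k IHk]; [exact: claim0 | exact: claimS].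
have [N [F [hmN HF]]] := claims #|T| m.
exists N, (F ++ [seq b - p (ysum D) | b <- F, D <- subs (iota m (N - m))]); split => // c.
case: (HF c) => [hM | [b [Ds [hbF hsz huniq hDs]]]].
  apply: Mono_sub hM => // g hg; by rewrite mem_cat hg.
have hin : c b \in map snd Ds.
  apply/negPn/negP => hn.
  have : uniq (c b :: map snd Ds) by rewrite /= hn huniq.
  move/card_uniqP => hc; have := max_card (mem (c b :: map snd Ds)).
  by rewrite hc /= size_map hsz ltnn.
case/mapP: hin => z hz hcz.
have [hz1 hrz hzQ] := hDs z hz.
exists (b - p (ysum z.1)), z.1; split => //.
  have [D' hD' <-] := subs_ysum hmN hrz.
  rewrite mem_cat; apply/orP; right; exact: (allpairs_f (fun b D => b - p (ysum D))).
exists (c b) => φ; rewrite inE => /orP [/eqP -> | hφ].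
  rewrite subrK; split => //; by rewrite mem_cat hbF.
have [h1 h2] := hzQ φ hφ; split; [by rewrite mem_cat h1 | by rewrite h2 hcz].
Qed.

End Focus.


Theorem core D (P : seq (fn G V)) :
  (forall φ, φ \in P -> deg_le D φ /\ φ 0 = 0) -> Phi P.
Proof.
suff H : forall s, Acc (lexR D.+1) s -> forall P, meas D P = s ->
    (forall φ, φ \in P -> deg_le D φ /\ φ 0 = 0) -> Phi P.
  move=> hP; apply: (H (meas D P) _ P erefl hP); apply: lex_acc; by rewrite size_map size_down.
move=> s acc; elim: acc => {}s _ IHs P0 hm hinv.
case: P0 hm hinv => [|φ1 l] hm hinv.
  move=> T m; exists m.+1, [:: 0]; split => // c; exists 0, [:: m]; split.
  - by rewrite mem_seq1.
  - by [].
  - by rewrite /rng /= leqnn ltnSn.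
  by exists (c 0).
have hex : exists d, pb (exists2 φ, φ \in φ1 :: l & level d φ).
  have [d _ hl] := level_exists (hinv φ1 (mem_head _ _)).1.
  exists d; apply/pbP; exists φ1 => //; exact: mem_head.
case: (ex_minnP hex) => d0 /pbP [p hp hpl] hmin.
have hmin' : forall φ d, φ \in φ1 :: l -> level d φ -> (d0 <= d)%N.
  move=> φ d hφ hl; apply: hmin; apply/pbP; by exists φ.
have hD : forall φ, φ \in φ1 :: l -> deg_le D φ by move=> φ /hinv [].
have h0 : forall φ, φ \in φ1 :: l -> φ 0 = 0 by move=> φ /hinv [].
have hQ0 : forall φ, φ \in [seq φ <- φ1 :: l | φ != p] -> φ 0 = 0.
  by move=> φ; rewrite mem_filter => /andP [_ /h0].
have IH : forall E : seq V, 0 \in E -> Phi (Pp p [seq φ <- φ1 :: l | φ != p] E).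
  move=> E hE; apply: (IHs (meas D (Pp p [seq φ <- φ1 :: l | φ != p] E)) _ _ erefl).
  - split; first by rewrite size_map size_down.
    rewrite -hm; exact: (meas_lt hD h0 hp hpl hmin' hE).
  - move=> ψ hψ; exact: (P'_inv hD hp hψ).
move=> T m; have [N [F [hmN HF]]] := focus_final T (h0 _ hp) hQ0 IH m.
exists N, F; split => // c; apply: Mono_sub (HF c) => //.
move=> φ hφ; rewrite in_cons mem_filter; case: (eqVneq φ p) => //= hne.
Qed.

End Comb.

Lemma meval_zero (G : comNzRingType) (n : nat) (f : {mpoly G[n]}) :
  f@_0%MM = 0 -> f.@[fun _ => 0] = 0.
Proof.
move=> h0; rewrite mevalE big1_seq // => m _.
case: (eqVneq m 0%MM) => [-> | hm]; first by rewrite h0 mul0r.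
have [i hi] : exists i, m i != 0%N.
  apply/not_all_not_ex => hall; move/eqP: hm; apply; apply/mnmP => i.
  by rewrite mnm0E; apply/eqP; apply/negPn/negP; exact: hall.
by rewrite (bigD1 i) //= expr0n (negbTE hi) mul0r mulr0.
Qed.

Lemma fd_list (G : comNzRingType) (V : zmodType) (P : seq (fn G V)) :
  (forall φ, φ \in P -> fd φ) -> exists D, forall φ, φ \in P -> deg_le D φ.
Proof.
elim: P => [|φ P IH] h; first by exists 0%N.
have [D1 h1] := h φ (mem_head _ _).
have [D2 h2] : exists D, forall ψ, ψ \in P -> deg_le D ψ.
  by apply: IH => ψ hψ; apply: h; rewrite in_cons hψ orbT.
exists (maxn D1 D2) => ψ; rewrite in_cons => /orP [/eqP -> | hψ].
  exact: deg_le_mono (leq_maxl _ _) h1.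
exact: deg_le_mono (leq_maxr _ _) (h2 _ hψ).
Qed.

Lemma shift_in_S (G : idomainType) (S : G -> Prop) :
  diff_group_semigroup S -> forall F : seq G,
  exists c0, S c0 /\ forall g, g \in F -> S (c0 + g).
Proof.
case=> hadd hdiff _; elim => [|g F [c1 [hc1 IH]]].
  have [a [b [ha hb _]]] := hdiff 0; by exists a.
have [a [b [ha hb ->]]] := hdiff g.
exists (c1 + b); split; first exact: hadd.
move=> g'; rewrite in_cons => /orP [/eqP -> | hg'].
  have -> : c1 + b + (a - b) = c1 + a by ring.
  exact: hadd.
by rewrite addrAC; apply: hadd => //; exact: IH.
Qed.

Unset Implicit Arguments.
Theorem corollary4p2 (G : idomainType) (S : G -> Prop)
  (hS : diff_group_semigroup S)
  (j : nat) (hj : (0 < j)%N)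
  (R : seq {mpoly G[j]}) (hRne : R != [::])
  (hR : forall f, f \in R -> is_integral_polynomial f)
  (A : G -> Prop) (hAS : forall a, A a -> S a)
  (hA : piecewise_syndetic S A)
  (y : nat -> 'I_j -> G) (hy : forall n i, S (y n i)) :
  exists a : G, S a /\
    exists H : seq nat,
      [/\ H != [::], uniq H, (forall n, n \in H -> (0 < n)%N) &
        forall f, f \in R ->
          A (a + f.@[fun i : 'I_j => \sum_(n <- H) y n i])].
Proof.
pose V := {ffun 'I_j -> G}.
pose y' : nat -> V := fun n => [ffun i => y n i].
pose ev (f : {mpoly G[j]}) : fn G V := fun v => f.@[fun i => v i].
pose P0 : seq (fn G V) := (fun _ => 0) :: map ev R.
have hfd : forall φ, φ \in P0 -> fd φ.
  move=> φ; rewrite in_cons => /orP [/eqP -> | /mapP [f _ ->]].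
    exact: fd_const.
  exact: fd_meval.
have [D hD] := fd_list hfd.
have h0 : forall φ, φ \in P0 -> φ 0 = 0.
  move=> φ; rewrite in_cons => /orP [/eqP -> // | /mapP [f hf ->]].
  rewrite /ev -(meval_zero (hR f hf)); apply: meval_eq => i; by rewrite ffunE.
have hPhi := core y' (D := D) (P := P0) (fun φ hφ => conj (hD φ hφ) (h0 φ hφ)).
case: hA => Gs [hGs hthick].
have [N [F [_ hF]]] := hPhi 'I_(size Gs).+1 1%N.
have [c0 [_ hc0]] := shift_in_S hS F.
have hFs : forall s, s \in [seq c0 + g | g <- F] -> S s.
  by move=> s /mapP [g hg ->]; exact: hc0.
have [x [hx hxs]] := hthick _ hFs.
pose col (g : G) : 'I_(size Gs).+1 := inord (find (fun t => pb (A (t + (c0 + g + x)))) Gs).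
have col_ok : forall g, g \in F -> A (nth 0 Gs (col g) + (c0 + g + x)).
  move=> g hg.
  have [t ht [_ hAt]] := hxs (c0 + g) (map_f _ hg).
  have hhas : has (fun t => pb (A (t + (c0 + g + x)))) Gs.
    by apply/hasP; exists t => //; apply/pbP.
  have hlt := hhas; rewrite has_find in hlt.
  rewrite /col inordK; last exact: ltnW hlt.
  exact/pbP/(nth_find 0 hhas).
have [a [H [haF hH hrH [cl hcl]]]] := hF col.
have hz : (fun _ : V => 0 : G) \in P0 by exact: mem_head.
have [hz1 hz2] := hcl _ hz; rewrite /= addr0 in hz1 hz2.
exists (nth 0 Gs cl + (c0 + a + x)); split.
  by apply: hAS; rewrite -hz2; exact: col_ok.
exists H; case/andP: hrH => hu hall; split => //.
  by move=> n /(allP hall) /andP [].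
move=> f hf.
have hφ : ev f \in P0 by rewrite in_cons map_f ?orbT.
have [h1 h2] := hcl _ hφ.
have := col_ok _ h1; rewrite h2.
have -> : ev f (ysum y' H) = f.@[fun i : 'I_j => \sum_(n <- H) y n i].
  rewrite /ev; apply: meval_eq => i; rewrite /ysum sum_ffunE.
  by apply: eq_bigr => n _; rewrite ffunE.
move=> hAf; congr A: hAf; ring.
Qed.
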